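(* Let $K\subset\mathbb{R}^2$ be the infinitely generated self-similar set defined in the context. Then $K$ has positive two-dimensional Lebesgue measure and empty interior. Moreover, for Lebesgue almost every $y\in[0,1]$ the horizontal fibre $K_y:=\{x\in\mathbb{R}:(x,y)\in K\}$ contains a nontrivial interval.
   Context: For $k\ge 0$ and $n\ge 1$ let $t_{k,n}:=\frac{1}{2^k n}$. Define the similarities of $\mathbb{R}^2$: $U(x,y)=\left(\frac{x}{2},\frac{y+1}{2}\right)$, $D_0(x,y)=\left(\frac{x}{2},\frac{y}{2}\right)$, and $D_{k,n}(x,y)=\left(\frac{x+t_{k,n}}{2},\frac{y}{2}\right)$ for $k\ge0,n\ge1$. Let $\Phi$ be this countable family. $K$ is the unique non-empty compact set $K\subset\mathbb{R}^2$ satisfying $K=U(K)\cup D_0(K)\cup\bigcup_{k\ge0,n\ge1}D_{k,n}(K)$. *)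

(* Defs.v *)
From Stdlib Require Export Reals.
Open Scope R_scope.

Definition pt := (R * R)%type.

Definition t_kn (k n : nat) : R := / (2 ^ k * INR n).
Definition U (p : pt) : pt := (fst p / 2, (snd p + 1) / 2).
Definition D0 (p : pt) : pt := (fst p / 2, snd p / 2).
Definition Dkn (k n : nat) (p : pt) : pt := ((fst p + t_kn k n) / 2, snd p / 2).

Definition ifs_invariant (K : pt -> Prop) : Prop :=
  forall p, K p <->
    ((exists q, K q /\ p = U q) \/
     (exists q, K q /\ p = D0 q) \/
     (exists k n, (1 <= n)%nat /\ exists q, K q /\ p = Dkn k n q)).

(* Compactness in R^2 via Heine–Borel: closed and bounded. *)
Definition closed2 (K : pt -> Prop) : Prop :=
  forall (u : nat -> pt) (l : pt),
    (forall m, K (u m)) ->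
    Un_cv (fun m => fst (u m)) (fst l) ->
    Un_cv (fun m => snd (u m)) (snd l) -> K l.
Definition bounded2 (K : pt -> Prop) : Prop :=
  exists M, forall p, K p -> Rabs (fst p) <= M /\ Rabs (snd p) <= M.
Definition compact2 (K : pt -> Prop) : Prop := closed2 K /\ bounded2 K.
Definition nonempty2 (K : pt -> Prop) : Prop := exists p, K p.

(* Lebesgue null sets (via countable covers by boxes of small total volume). *)
Definition null2 (S : pt -> Prop) : Prop :=
  forall eps, 0 < eps ->
  exists a b c d : nat -> R,
    (forall i, a i <= b i /\ c i <= d i) /\
    (forall p, S p -> exists i,
        a i <= fst p <= b i /\ c i <= snd p <= d i) /\
    (forall N, sum_f_R0 (fun i => (b i - a i) * (d i - c i)) N <= eps).

Definition null1 (S : R -> Prop) : Prop :=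
  forall eps, 0 < eps ->
  exists a b : nat -> R,
    (forall i, a i <= b i) /\
    (forall y, S y -> exists i, a i <= y <= b i) /\
    (forall N, sum_f_R0 (fun i => b i - a i) N <= eps).

(* For a (compact, hence measurable) set, positive Lebesgue measure = not null. *)
Definition positive_measure2 (K : pt -> Prop) : Prop := ~ null2 K.

Definition empty_interior2 (K : pt -> Prop) : Prop :=
  ~ exists p r, 0 < r /\ forall q,
      Rabs (fst q - fst p) < r -> Rabs (snd q - snd p) < r -> K q.

Definition fibre_has_interval (K : pt -> Prop) (y : R) : Prop :=
  exists a b, a < b /\ forall x, a <= x <= b -> K (x, y).

(* Main.v *)
Require Import Defs.
From Stdlib Require Import Reals Lra Lia List Classical ZArith.
From Coquelicot Require Coquelicot.
Import ListNotations.
Open Scope R_scope.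

Lemma Rabs_le_inv a b : Rabs a <= b -> - b <= a <= b.
Proof. unfold Rabs; destruct (Rcase_abs a); intros; lra. Qed.

Lemma Rabs_lt_inv a b : Rabs a < b -> - b < a < b.
Proof. unfold Rabs; destruct (Rcase_abs a); intros; lra. Qed.

Lemma tkn_bounds k n : (1 <= n)%nat -> 0 < t_kn k n <= 1.
Proof.
  intros Hn. unfold t_kn.
  assert (H1 : 1 <= 2 ^ k) by (apply pow_R1_Rle; lra).
  assert (H2 : 1 <= INR n) by (apply (le_INR 1); lia).
  assert (H3 : 1 <= 2 ^ k * INR n) by nra.
  split. apply Rinv_0_lt_compat; lra.
  rewrite <- Rinv_1. apply Rinv_le_contravar; lra.
Qed.

Lemma inv_step (K : pt -> Prop) p : ifs_invariant K -> K p ->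
  exists q t d, K q /\ 0 <= t <= 1 /\ (d = 0 \/ d = 1) /\
    fst p = (fst q + t) / 2 /\ snd p = (snd q + d) / 2.
Proof.
  intros HI Hp. apply HI in Hp.
  destruct Hp as [[q [Hq ->]] | [[q [Hq ->]] | [k [n [Hn [q [Hq ->]]]]]]].
  - exists q, 0, 1. simpl. repeat split; auto; lra.
  - exists q, 0, 0. simpl. repeat split; auto; lra.
  - exists q, (t_kn k n), 0. pose proof (tkn_bounds k n Hn). simpl.
    repeat split; auto; lra.
Qed.

Lemma lim_half_le (a c M : R) : (forall n, a <= c + M * (/2)^n) -> a <= c.
Proof.
  intros H. destruct (Rle_dec a c) as [|Hn]; auto. exfalso.
  assert (HM : 0 <= M). { specialize (H 0%nat). simpl in H. lra. }
  destruct (pow_lt_1_zero (/2)) with (y := (a - c) / (M + 1)) as [N HN].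
  { rewrite Rabs_right; lra. }
  { apply Rdiv_lt_0_compat; lra. }
  specialize (HN N (Nat.le_refl _)). specialize (H N).
  rewrite Rabs_right in HN by (apply Rle_ge, pow_le; lra).
  assert (Hp : 0 <= (/2)^N) by (apply pow_le; lra).
  assert ((/2)^N * (M+1) < a - c).
  { apply (Rmult_lt_compat_r (M+1)) in HN; [|lra].
    unfold Rdiv in HN. rewrite Rmult_assoc, Rinv_l in HN; lra. }
  nra.
Qed.

Lemma K_unit (K : pt -> Prop) : compact2 K -> ifs_invariant K ->
  forall p, K p -> 0 <= fst p <= 1 /\ 0 <= snd p <= 1.
Proof.
  intros [_ [M HM]] HI.
  assert (H : forall n p, K p -> - M * (/2)^n <= fst p <= 1 + M * (/2)^n /\
                               - M * (/2)^n <= snd p <= 1 + M * (/2)^n).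
  { induction n; intros p Hp.
    - simpl. destruct (HM p Hp) as [H1 H2].
      apply Rabs_le_inv in H1; apply Rabs_le_inv in H2; lra.
    - destruct (inv_step K p HI Hp) as [q [t [d [Hq [Ht [Hd [E1 E2]]]]]]].
      destruct (IHn q Hq) as [[A1 A2] [A3 A4]]. simpl.
      rewrite E1, E2. destruct Hd; subst d; repeat split; nra. }
  intros p Hp. repeat split.
  - cut (- fst p <= 0). lra. apply (lim_half_le _ 0 M). intros n.
    destruct (H n p Hp). lra.
  - apply (lim_half_le _ 1 M). intros n. destruct (H n p Hp). lra.
  - cut (- snd p <= 0). lra. apply (lim_half_le _ 0 M). intros n.
    destruct (H n p Hp). lra.
  - apply (lim_half_le _ 1 M). intros n. destruct (H n p Hp). lra.
Qed.

Definition Tset (t : R) : Prop := t = 0 \/ exists k n, (1 <= n)%nat /\ t = t_kn k n.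

Fixpoint Sw (Bs : R -> Prop) (w : list bool) (z : R) : Prop :=
  match w with
  | [] => Bs z
  | b :: w' => exists z' t, Sw Bs w' z' /\ (if b then t = 0 else Tset t) /\ z = (z' + t) / 2
  end.

Fixpoint incell (w : list bool) (y : R) : Prop :=
  match w with
  | [] => 0 < y < 1
  | b :: w' => incell w' (2 * y - (if b then 1 else 0))
  end.

Lemma incell_01 w : forall y, incell w y -> 0 < y < 1.
Proof.
  induction w as [|b w IH]; simpl; intros y H; auto.
  apply IH in H. destruct b; lra.
Qed.

Lemma incell_ex w : exists z, incell w z.
Proof.
  induction w as [|b w [z Hz]]; simpl.
  - exists (1/2). lra.
  - exists ((z + (if b then 1 else 0)) / 2).
    replace (2 * ((z + (if b then 1 else 0)) / 2) - (if b then 1 else 0)) with z by lra.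
    auto.
Qed.

Lemma Sw_mono (Bs Bs' : R -> Prop) w : (forall z, Bs z -> Bs' z) ->
  forall z, Sw Bs w z -> Sw Bs' w z.
Proof.
  intros HB. induction w as [|b w IH]; simpl; auto.
  intros z [z' [t [H1 [H2 H3]]]]. exists z', t. auto.
Qed.

Lemma Sw_app (Bs Bs' : R -> Prop) w1 w2 : (forall z, Sw Bs w2 z -> Bs' z) ->
  forall z, Sw Bs (w1 ++ w2) z -> Sw Bs' w1 z.
Proof.
  intros HB. induction w1 as [|b w IH]; simpl; auto.
  intros z [z' [t [H1 [H2 H3]]]]. exists z', t. auto.
Qed.

Lemma Sw_ones L : forall z, Sw (fun z => 0 <= z <= 1) (repeat true L) z -> 0 <= z <= (/2)^L.
Proof.
  induction L; simpl; intros z H. lra.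
  destruct H as [z' [t [H1 [H2 H3]]]]. apply IHL in H1. subst. lra.
Qed.

Lemma K_Sw (K : pt -> Prop) : compact2 K -> ifs_invariant K ->
  forall w p, K p -> incell w (snd p) -> Sw (fun z => 0 <= z <= 1) w (fst p).
Proof.
  intros HC HI. induction w as [|b w IH]; simpl; intros p Hp Hc.
  - apply (K_unit K HC HI p Hp).
  - pose proof (incell_01 _ _ Hc) as H01.
    apply HI in Hp.
    destruct Hp as [[q [Hq ->]] | [[q [Hq ->]] | [k [n [Hn [q [Hq ->]]]]]]];
      simpl in *; pose proof (K_unit K HC HI q Hq) as Hu.
    + destruct b; [|lra]. exists (fst q), 0. split; [|split; auto; lra].
      apply IH; auto. replace (2 * ((snd q + 1) / 2) - 1) with (snd q) in Hc by lra. auto.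
    + destruct b; [lra|]. exists (fst q), 0. split; [|split; [left; auto| lra]].
      apply IH; auto. replace (2 * (snd q / 2) - 0) with (snd q) in Hc by lra. auto.
    + destruct b; [lra|]. exists (fst q), (t_kn k n). split; [|split; [right; eauto| lra]].
      apply IH; auto. replace (2 * (snd q / 2) - 0) with (snd q) in Hc by lra. auto.
Qed.

Fixpoint wordof (y : R) (N : nat) : list bool :=
  match N with
  | O => []
  | S N' => if Rlt_dec y (1/2) then false :: wordof (2 * y) N'
            else true :: wordof (2 * y - 1) N'
  end.

Lemma wordof_cell N : forall y w', 0 <= y < 1 ->
  exists z, incell (wordof y N ++ w') z /\ Rabs (z - y) <= (/2)^N.
Proof.
  induction N; intros y w' Hy; simpl.
  - destruct (incell_ex w') as [z Hz]. exists z. split; auto.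
    apply incell_01 in Hz. apply Rabs_le; lra.
  - destruct (Rlt_dec y (1/2)).
    + destruct (IHN (2 * y) w') as [z [Hz Hd]]; [lra|].
      exists (z / 2). simpl. replace (2 * (z / 2) - 0) with z by lra. split; auto.
      apply Rabs_le_inv in Hd. apply Rabs_le; lra.
    + destruct (IHN (2 * y - 1) w') as [z [Hz Hd]]; [lra|].
      exists ((z + 1) / 2). simpl. replace (2 * ((z + 1) / 2) - 1) with z by lra. split; auto.
      apply Rabs_le_inv in Hd. apply Rabs_le; lra.
Qed.

Lemma pow_small (th : R) : 0 < th -> exists N, (/2)^N <= th.
Proof.
  intros H. destruct (pow_lt_1_zero (/2)) with (y := th) as [N HN].
  { rewrite Rabs_right; lra. } auto.
  exists N. specialize (HN N (Nat.le_refl _)).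
  rewrite Rabs_right in HN by (apply Rle_ge, pow_le; lra). lra.
Qed.

Definition Bint (e : R) := fun z => 0 <= z <= e.

Definition avoids (S : R -> Prop) (a s : R) := forall z, a <= z <= a + s -> ~ S z.

Lemma ND_inner w :
  (forall a s, 0 < s -> exists a' s' e, 0 < s' /\ 0 < e /\ a <= a' /\ a' + s' <= a + s /\
      avoids (Sw (Bint e) w) a' s') ->
  forall M a s, 0 < s -> exists a' s' e, 0 < s' /\ 0 < e /\ a <= a' /\ a' + s' <= a + s /\
      forall z, a' <= z <= a' + s' -> forall m, (1 <= m <= M)%nat ->
        ~ Sw (Bint e) w (z - / INR m).
Proof.
  intros IH. induction M; intros a s Hs.
  - exists a, s, 1. repeat split; try lra. intros z _ m Hm. lia.
  - destruct (IHM a s Hs) as [a1 [s1 [e1 [Hs1 [He1 [L1 [L2 Hav1]]]]]]].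
    set (t := / INR (S M)).
    destruct (IH (a1 - t) s1 Hs1) as [a2 [s2 [e2 [Hs2 [He2 [L3 [L4 Hav2]]]]]]].
    exists (a2 + t), s2, (Rmin e1 e2). repeat split; try lra.
    + apply Rmin_glb_lt; auto.
    + intros z Hz m Hm Hsw. destruct (Nat.eq_dec m (S M)) as [->|Hne].
      * apply (Hav2 (z - t)); [lra|]. fold t in Hsw.
        revert Hsw. apply Sw_mono. unfold Bint. intros x Hx. pose proof (Rmin_r e1 e2). lra.
      * apply (Hav1 z) with m; [lra|lia|].
        revert Hsw. apply Sw_mono. unfold Bint. intros x Hx. pose proof (Rmin_l e1 e2). lra.
Qed.

Lemma ND w : forall a s, 0 < s -> exists a' s' e, 0 < s' /\ 0 < e /\ a <= a' /\ a' + s' <= a + s /\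
      avoids (Sw (Bint e) w) a' s'.
Proof.
  induction w as [|b w IH]; intros a s Hs.
  - simpl. destruct (Rlt_dec 0 (a + s/2)).
    + exists (a + s/2), (s/4), ((a + s/2)/2). repeat split; try lra.
      intros z Hz Hb. unfold Bint in Hb. lra.
    + exists a, (s/4), 1. repeat split; try lra.
      intros z Hz Hb. unfold Bint in Hb. lra.
  - destruct b.
    + destruct (IH (2*a) (2*s)) as [a' [s' [e [Hs' [He [L1 [L2 Hav]]]]]]]; [lra|].
      exists (a'/2), (s'/2), e. repeat split; try lra.
      intros z Hz [z' [t [H1 [H2 H3]]]]. subst t.
      apply (Hav z'); [lra|auto].
    + destruct (IH (2*a) (2*s)) as [a0 [s0 [e0 [Hs0 [He0 [L1 [L2 Hav0]]]]]]]; [lra|].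
      destruct (archimed (4 / s0)) as [Ha1 Ha2].
      assert (Hpos : 0 < 4 / s0) by (apply Rdiv_lt_0_compat; lra).
      assert (Hup : (0 <= up (4 / s0))%Z) by (apply le_IZR; lra).
      set (M := Z.to_nat (up (4 / s0))).
      assert (HM : 4 / s0 < INR M).
      { unfold M. rewrite INR_IZR_INZ, Z2Nat.id; auto. }
      destruct (ND_inner w IH M (a0 + s0/4) (s0/4)) as
          [a2 [s2 [e2 [Hs2 [He2 [L3 [L4 Hav2]]]]]]]; [lra|].
      exists (a2/2), (s2/2), (Rmin e0 e2). repeat split; try lra.
      { apply Rmin_glb_lt; auto. }
      intros z Hz [z' [t [H1 [H2 H3]]]].
      assert (Hz2 : a2 <= 2 * z <= a2 + s2) by lra.
      destruct H2 as [Ht | [k [n [Hn Ht]]]].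
      * subst t. apply (Hav0 z'); [lra|].
        revert H1. apply Sw_mono. unfold Bint. intros x Hx. pose proof (Rmin_l e0 e2). lra.
      * assert (Htm : t = / INR (Nat.pow 2 k * n)).
        { rewrite Ht. unfold t_kn. rewrite mult_INR, pow_INR. simpl. f_equal. }
        set (m := (Nat.pow 2 k * n)%nat) in *.
        assert (Hm1 : (1 <= m)%nat).
        { unfold m. pose proof (Nat.pow_nonzero 2 k). lia. }
        destruct (le_lt_dec m M) as [HmM | HmM].
        -- apply (Hav2 (2 * z) Hz2 m); [lia|].
           replace (2 * z - / INR m) with z' by (rewrite <- Htm; lra).
           revert H1. apply Sw_mono. unfold Bint. intros x Hx. pose proof (Rmin_r e0 e2). lra.
        -- assert (Htsmall : t < s0 / 4).
           { rewrite Htm. assert (INR M < INR m) by (apply lt_INR; auto).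
             assert (0 < s0) by lra.
             assert (Hm0 : 0 < INR m) by lra.
             apply (Rmult_lt_reg_r (INR m)); auto. rewrite Rinv_l by lra.
             unfold Rdiv in HM. 
             assert (4 < s0 * INR M).
             { apply (Rmult_lt_compat_l s0) in HM; auto. rewrite <- Rmult_assoc in HM.
               rewrite (Rmult_comm s0 4), Rmult_assoc, Rinv_r in HM; lra. }
             nra. }
           assert (0 <= t) by (rewrite Ht; pose proof (tkn_bounds k n Hn); lra).
           apply (Hav0 z'); [lra|].
           revert H1. apply Sw_mono. unfold Bint. intros x Hx. pose proof (Rmin_l e0 e2). lra.
Qed.

Lemma empty_int (K : pt -> Prop) : compact2 K -> ifs_invariant K -> empty_interior2 K.
Proof.
  intros HC HI [p [r [Hr HQ]]].
  assert (Kp : K p) by (apply HQ; rewrite Rminus_diag, Rabs_R0; lra).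
  pose proof (K_unit K HC HI p Kp) as [_ Hy].
  set (r' := Rmin r 1 / 4).
  assert (Hr' : 0 < r' <= r / 4).
  { unfold r'. split. apply Rdiv_lt_0_compat; [apply Rmin_glb_lt|]; lra.
    pose proof (Rmin_l r 1). lra. }
  assert (Hr1 : r' <= 1/4) by (unfold r'; pose proof (Rmin_r r 1); lra).
  set (y1 := if Rlt_dec (snd p) (1/2) then snd p + r' else snd p - r').
  assert (Hy1 : 0 <= y1 < 1 /\ Rabs (y1 - snd p) <= r / 4).
  { unfold y1. destruct (Rlt_dec (snd p) (1/2)); split; try lra; apply Rabs_le; lra. }
  destruct (pow_small (r/4)) as [N HN]; [lra|].
  destruct (ND (wordof y1 N) (fst p - r/4) (r/2)) as [a' [s' [e [Hs' [He [L1 [L2 Hav]]]]]]]; [lra|].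
  destruct (pow_small e He) as [L HL].
  destruct (wordof_cell N y1 (repeat true L)) as [z [Hz Hzd]]; [lra|].
  assert (Kq : K (a', z)).
  { apply HQ; simpl.
    - apply Rabs_def1; lra.
    - apply Rabs_le_inv in Hzd. destruct Hy1 as [_ Hy1]. apply Rabs_le_inv in Hy1.
      apply Rabs_def1; lra. }
  pose proof (K_Sw K HC HI _ _ Kq Hz) as HS. simpl in HS.
  apply (Hav a'); [lra|].
  revert HS. apply Sw_app. intros x Hx. apply Sw_ones in Hx. unfold Bint. lra.
Qed.

Fixpoint FailN (b N : nat) (z : R) : Prop :=
  (b <= 4)%nat \/
  match N with
  | O => False
  | S N' => if Rlt_dec z (1/2) then FailN (2*b-2) N' (2*z) else FailN (b-1) N' (2*z-1)
  end.

Definition mch (rho : R) : nat := Z.to_nat (up (/ (2 * rho))).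
Definition sel (rho : R) : R := if Rlt_dec 0 rho then / INR (mch rho) else 0.
Definition dig (z : R) : R := if Rlt_dec z (1/2) then 0 else 1.
Definition sv (z rho : R) : R := if Rlt_dec z (1/2) then sel rho else 0.
Definition stepF (s : nat * R * R) : nat * R * R :=
  let '(b, z, rho) := s in
  ((if Rlt_dec z (1/2) then 2*b-2 else b-1)%nat, 2*z - dig z, 2*rho - sv z rho).
Fixpoint st (B : nat) (y x : R) (n : nat) : nat * R * R :=
  match n with O => (B, y, x) | S n' => stepF (st B y x n') end.
Definition gmap (s : nat * R * R) (q : pt) : pt :=
  let '(b, z, rho) := s in
  if Rlt_dec z (1/2) then (if Rlt_dec 0 rho then Dkn 0 (mch rho) q else D0 q) else U q.

Lemma mch_prop rho : 0 < rho ->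
  (1 <= mch rho)%nat /\ / (2 * rho) < INR (mch rho) <= / (2 * rho) + 1.
Proof.
  intros H. unfold mch. destruct (archimed (/ (2 * rho))) as [A1 A2].
  assert (0 < / (2 * rho)) by (apply Rinv_0_lt_compat; lra).
  assert (Hz : (1 <= up (/ (2 * rho)))%Z).
  { apply le_IZR. assert (0 < IZR (up (/ (2 * rho)))) by lra.
    apply lt_IZR in H1. apply IZR_le. lia. }
  rewrite INR_IZR_INZ, Z2Nat.id by lia. split; [lia|lra].
Qed.

Lemma gmap_spec (K : pt -> Prop) s q : ifs_invariant K -> K q ->
  K (gmap s q) /\ gmap s q = ((fst q + sv (snd (fst s)) (snd s)) / 2,
                               (snd q + dig (snd (fst s))) / 2).
Proof.
  intros HI Hq. destruct s as [[b z] rho]. simpl. unfold sv, dig, sel.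
  destruct (Rlt_dec z (1/2)).
  - destruct (Rlt_dec 0 rho).
    + split.
      * apply HI. right; right. exists 0%nat, (mch rho). split. apply (mch_prop rho r0).
        exists q. split; auto.
      * unfold Dkn, t_kn. simpl. f_equal; [|lra]. f_equal. f_equal. f_equal. lra.
    + split. apply HI. right; left. exists q; auto.
      unfold D0. f_equal; lra.
  - split. apply HI. left. exists q; auto. unfold U. f_equal; lra.
Qed.

Lemma pow2m b : (1 <= b)%nat -> (/2)^(2*b-2) = 4 * ((/2)^b * (/2)^b).
Proof.
  intros Hb. rewrite <- pow_add.
  replace (b + b)%nat with ((2*b-2) + 2)%nat by lia.
  rewrite pow_add. simpl. field.
Qed.

Lemma zero_step rho b : (5 <= b)%nat -> 0 < rho <= (/2)^b ->
  0 <= 2 * rho - / INR (mch rho) <= (/2)^(2*b-2).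
Proof.
  intros Hb Hr. destruct (mch_prop rho (proj1 Hr)) as [_ [M1 M2]].
  set (w := / (2 * rho)) in *. set (m := INR (mch rho)) in *.
  assert (Hw : 0 < w) by (unfold w; apply Rinv_0_lt_compat; lra).
  assert (E : 2 * rho = / w) by (unfold w; rewrite Rinv_inv; auto).
  rewrite E. rewrite pow2m by lia.
  assert (Hp : 0 < (/2)^b) by (apply pow_lt; lra).
  split.
  - assert (/ m <= / w) by (apply Rinv_le_contravar; lra). lra.
  - replace (/ w - / m) with ((m - w) / (w * m)) by (field; lra).
    assert ((m - w) / (w * m) <= / (w * w)).
    { unfold Rdiv. apply (Rmult_le_reg_l (w * m)). nra.
      rewrite <- Rmult_assoc, (Rmult_comm (w*m)), Rmult_assoc, Rinv_r by nra.
      replace (w * m * / (w * w)) with (m / w) by (field; lra).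
      apply (Rmult_le_reg_l w); auto. field_simplify; nra. }
    assert (/ (w * w) = 4 * (rho * rho)).
    { unfold w. field. lra. }
    nra.
Qed.

Definition Inv (s : nat * R * R) : Prop :=
  let '(b, z, rho) := s in
  0 <= z < 1 /\ 0 <= rho <= (/2)^b /\ (forall N, ~ FailN b N z).

Lemma step_inv s : Inv s -> Inv (stepF s).
Proof.
  destruct s as [[b z] rho]. simpl. intros [Hz [Hr Hf]].
  assert (Hb : (5 <= b)%nat).
  { destruct (le_lt_dec b 4); [|lia]. exfalso. apply (Hf O). simpl. auto. }
  unfold dig, sv, sel. destruct (Rlt_dec z (1/2)).
  - split; [lra|]. split.
    + destruct (Rlt_dec 0 rho).
      * apply zero_step; auto. lra.
      * assert (rho = 0) by lra. subst. rewrite Rminus_0_r, Rmult_0_r.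
        split; [lra|]. apply pow_le; lra.
    + intros N HF. apply (Hf (S N)). simpl. right.
      destruct (Rlt_dec z (1/2)); [|contradiction]. replace (2*z-0) with (2*z) in HF by ring. auto.
  - split; [lra|]. split.
    + replace (b - 1)%nat with (S (b - 2)) in * by lia.
      replace b with (S (S (b-2))) in Hr by lia. simpl in *. lra.
    + intros N HF. apply (Hf (S N)). simpl. right.
      destruct (Rlt_dec z (1/2)); [contradiction|]. auto.
Qed.

Definition Phi (x y : R) (s : nat * R * R) (n : nat) (q : pt) : pt :=
  (x - (/2)^n * snd s + (/2)^n * fst q, y - (/2)^n * snd (fst s) + (/2)^n * snd q).

Lemma Phi_K (K : pt -> Prop) B x y : ifs_invariant K ->
  forall n q, K q -> K (Phi x y (st B y x n) n q).
Proof.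
  intros HI. induction n; intros q Hq.
  - unfold Phi. simpl. replace (x - 1 * x + 1 * fst q) with (fst q) by ring.
    replace (y - 1 * y + 1 * snd q) with (snd q) by ring. destruct q; auto.
  - destruct (gmap_spec K (st B y x n) q HI Hq) as [Kg Eg].
    specialize (IHn _ Kg).
    replace (Phi x y (st B y x (S n)) (S n) q) with (Phi x y (st B y x n) n (gmap (st B y x n) q)); auto.
    rewrite Eg. unfold Phi. simpl. destruct (st B y x n) as [[b z] rho]. simpl.
    f_equal; field.
Qed.

Lemma Inv_st B y x : Inv (B, y, x) -> forall n, Inv (st B y x n).
Proof. intros H. induction n; simpl; auto. apply step_inv; auto. Qed.

Lemma pow_le1 x n : 0 <= x <= 1 -> x ^ n <= 1.
Proof. intros H. induction n; simpl. lra. assert (0 <= x^n) by (apply pow_le; lra). nra. Qed.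

Lemma cv_small (a C : R) (w : nat -> R) : (forall n, Rabs (w n) <= C) ->
  Un_cv (fun n => a + (/2)^n * w n) a.
Proof.
  intros Hw eps He.
  assert (HC : 0 <= C) by (specialize (Hw O); pose proof (Rabs_pos (w O)); lra).
  destruct (pow_lt_1_zero (/2)) with (y := eps / (C + 1)) as [N HN].
  { rewrite Rabs_right; lra. } { apply Rdiv_lt_0_compat; lra. }
  exists N. intros n Hn. specialize (HN n Hn). unfold R_dist.
  replace (a + (/2)^n * w n - a) with ((/2)^n * w n) by ring.
  rewrite Rabs_mult. rewrite Rabs_right in * by (apply Rle_ge, pow_le; lra).
  assert (Hp : 0 <= (/2)^n) by (apply pow_le; lra).
  specialize (Hw n). pose proof (Rabs_pos (w n)).
  assert ((/2)^n * (C + 1) < eps).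
  { apply (Rmult_lt_compat_r (C+1)) in HN; [|lra].
    unfold Rdiv in HN. rewrite Rmult_assoc, Rinv_l in HN; lra. }
  nra.
Qed.

Lemma greedy (K : pt -> Prop) : nonempty2 K -> compact2 K -> ifs_invariant K ->
  forall B y, 0 <= y < 1 -> (forall N, ~ FailN B N y) ->
  forall x, 0 <= x <= (/2)^B -> K (x, y).
Proof.
  intros [q0 Hq0] HC HI B y Hy Hf x Hx.
  pose proof (K_unit K HC HI q0 Hq0) as Hu.
  assert (HInv := Inv_st B y x (conj Hy (conj Hx Hf))).
  destruct HC as [Hcl _].
  apply (Hcl (fun n => Phi x y (st B y x n) n q0)).
  - intros m. apply Phi_K; auto.
  - simpl. unfold Phi. simpl.
    apply (Un_cv_ext (fun n => x + (/2)^n * (fst q0 - snd (st B y x n)))).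
    { intros n. simpl. ring. }
    apply (cv_small x 2). intros n. specialize (HInv n).
    destruct (st B y x n) as [[b z] rho]. simpl in *. destruct HInv as [_ [Hr _]].
    assert ((/2)^b <= 1) by (apply pow_le1; lra).
    apply Rabs_le; lra.
  - simpl. unfold Phi. simpl.
    apply (Un_cv_ext (fun n => y + (/2)^n * (snd q0 - snd (fst (st B y x n))))).
    { intros n. simpl. ring. }
    apply (cv_small y 2). intros n. specialize (HInv n).
    destruct (st B y x n) as [[b z] rho]. simpl in *. destruct HInv as [Hz _].
    apply Rabs_le; lra.
Qed.

Fixpoint CovE (b n : nat) (lo len : R) : list (R * R) :=
  if Nat.leb b 4 then (match n with O => [(lo, lo + len)] | _ => [] end)
  else match n with
       | O => []
       | S n' => CovE (2*b-2) n' lo (len/2) ++ CovE (b-1) n' (lo + len/2) (len/2)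
       end.

Fixpoint Ep (n b : nat) : R :=
  if Nat.leb b 4 then (match n with O => 1 | _ => 0 end)
  else match n with
       | O => 0
       | S n' => (Ep n' (2*b-2) + Ep n' (b-1)) / 2
       end.

Definition tot (l : list (R * R)) : R := fold_right (fun p acc => (snd p - fst p) + acc) 0 l.

Lemma tot_app l1 l2 : tot (l1 ++ l2) = tot l1 + tot l2.
Proof. induction l1; simpl; [ring|]. rewrite IHl1. ring. Qed.

Lemma tot_nonneg l : (forall p, In p l -> fst p <= snd p) -> 0 <= tot l.
Proof.
  induction l; simpl; intros H; [lra|].
  assert (fst a <= snd a) by auto. assert (0 <= tot l) by auto. lra.
Qed.

Lemma CovE_tot n : forall b lo len, tot (CovE b n lo len) = len * Ep n b.
Proof.
  induction n; intros b lo len; simpl; destruct (Nat.leb b 4); simpl; try ring.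
  rewrite tot_app, !IHn. field.
Qed.

Lemma CovE_wf n : forall b lo len, 0 <= len -> forall p, In p (CovE b n lo len) -> fst p <= snd p.
Proof.
  induction n; intros b lo len Hl p Hp; simpl in Hp; destruct (Nat.leb b 4);
    simpl in Hp; try tauto.
  - destruct Hp as [<-|[]]. simpl. lra.
  - apply in_app_or in Hp. destruct Hp as [Hp|Hp]; (eapply IHn; [|exact Hp]); lra.
Qed.

Lemma CovE_cover N : forall b z lo len, 0 < len -> 0 <= z < 1 -> FailN b N z ->
  exists n, (n <= N)%nat /\ exists p, In p (CovE b n lo len) /\ fst p <= lo + len * z <= snd p.
Proof.
  induction N; intros b z lo len Hl Hz HF.
  - simpl in HF. destruct HF as [Hb|[]]. exists O. split; auto.
    exists (lo, lo + len). simpl. apply Nat.leb_le in Hb. rewrite Hb. simpl.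
    split; auto. simpl. nra.
  - simpl in HF. destruct (le_lt_dec b 4) as [Hb|Hb].
    + exists O. split; [lia|]. exists (lo, lo + len). simpl.
      apply Nat.leb_le in Hb. rewrite Hb. simpl. split; auto. simpl. nra.
    + destruct HF as [Hb'|HF]; [lia|].
      assert (Hbf : Nat.leb b 4 = false) by (apply Nat.leb_gt; auto).
      destruct (Rlt_dec z (1/2)) as [Hlt|Hge].
      * destruct (IHN _ (2*z) lo (len/2) ltac:(lra) ltac:(lra) HF) as [n [Hn [p [Hp Hc]]]]; auto; try lra.
        exists (S n). split; [lia|]. exists p. simpl. rewrite Hbf. split.
        apply in_or_app; auto. replace (lo + len * z) with (lo + len / 2 * (2 * z)) by field. auto.
      * destruct (IHN _ (2*z-1) (lo + len/2) (len/2) ltac:(lra) ltac:(lra) HF) as [n [Hn [p [Hp Hc]]]]; auto; try lra.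
        exists (S n). split; [lia|]. exists p. simpl. rewrite Hbf. split.
        apply in_or_app; auto. replace (lo + len * z) with (lo + len / 2 + len / 2 * (2 * z - 1)) by field. auto.
Qed.

Lemma Ep_small N b : (b <= 4)%nat -> sum_f_R0 (fun n => Ep n b) N = 1.
Proof.
  intros Hb. apply Nat.leb_le in Hb.
  induction N; [simpl; rewrite Hb; auto|].
  change (sum_f_R0 (fun n => Ep n b) N + Ep (S N) b = 1). rewrite IHN.
  simpl. rewrite Hb. ring.
Qed.

Lemma Ep_shift N b : (5 <= b)%nat ->
  sum_f_R0 (fun n => Ep (S n) b) N =
  (sum_f_R0 (fun n => Ep n (2*b-2)) N + sum_f_R0 (fun n => Ep n (b-1)) N) / 2.
Proof.
  intros Hb. assert (Hbf : Nat.leb b 4 = false) by (apply Nat.leb_gt; lia).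
  assert (ES : forall n, Ep (S n) b = (Ep n (2*b-2) + Ep n (b-1)) / 2).
  { intros n. simpl. rewrite Hbf. reflexivity. }
  induction N.
  - change (Ep 1 b = (Ep 0 (2*b-2) + Ep 0 (b-1)) / 2). apply ES.
  - change (sum_f_R0 (fun n => Ep (S n) b) N + Ep (S (S N)) b =
      (sum_f_R0 (fun n => Ep n (2*b-2)) N + Ep (S N) (2*b-2) + (sum_f_R0 (fun n => Ep n (b-1)) N + Ep (S N) (b-1))) / 2).
    rewrite IHN, ES. field.
Qed.

Lemma c_ineq k : (9/10)^(2*k+4) + (9/10)^k <= 2 * (9/10)^(k+1).
Proof.
  assert (H1 : (9/10)^(k+4) <= (9/10)^4).
  { replace (k+4)%nat with (4+k)%nat by lia. rewrite pow_add.
    assert ((9/10)^k <= 1) by (apply pow_le1; lra).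
    assert (0 <= (9/10)^k) by (apply pow_le; lra).
    assert (0 < (9/10)^4) by (apply pow_lt; lra). nra. }
  replace (2*k+4)%nat with (k + (k+4))%nat by lia. rewrite (pow_add _ k (k+4)).
  rewrite (pow_add _ k 1). 
  assert (E4 : (9/10)^4 = 6561/10000) by (simpl; field).
  assert (0 <= (9/10)^k) by (apply pow_le; lra).
  assert (0 <= (9/10)^(k+4)) by (apply pow_le; lra). simpl pow at 3. nra.
Qed.

Lemma Ep_bound N : forall b, sum_f_R0 (fun n => Ep n b) N <= (9/10)^(b-4).
Proof.
  induction N; intros b.
  - simpl. destruct (Nat.leb b 4) eqn:E; [|apply pow_le; lra].
    apply Nat.leb_le in E. replace (b-4)%nat with O by lia. simpl. lra.
  - destruct (le_lt_dec b 4) as [Hb|Hb].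
    + rewrite Ep_small by auto. replace (b-4)%nat with O by lia. simpl. lra.
    + rewrite decomp_sum by lia. simpl pred.
      rewrite Ep_shift by lia.
      assert (E0 : Ep 0 b = 0) by (simpl; replace (Nat.leb b 4) with false; auto;
                                   symmetry; apply Nat.leb_gt; auto).
      rewrite E0.
      pose proof (IHN (2*b-2)%nat). pose proof (IHN (b-1)%nat).
      pose proof (c_ineq (b-5)).
      replace (2*b-2-4)%nat with (2*(b-5)+4)%nat in * by lia.
      replace (b-1-4)%nat with (b-5)%nat in * by lia.
      replace (b-4)%nat with (b-5+1)%nat by lia. lra.
Qed.

Definition plen (p : R * R) : R := snd p - fst p.

Lemma sum_nth_le l : (forall p, In p l -> fst p <= snd p) ->
  forall N, sum_f_R0 (fun i => plen (nth i l (0,0))) N <= tot l.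
Proof.
  induction l as [|a l IH]; intros H N.
  - assert (forall N, sum_f_R0 (fun i => plen (nth i [] (0,0))) N = 0).
    { induction N0. unfold plen; simpl; ring.
      change (sum_f_R0 (fun i => plen (nth i [] (0,0))) N0 + plen (nth (S N0) [] (0,0)) = 0).
      rewrite IHN0. unfold plen; simpl; ring. }
    rewrite H0. simpl. lra.
  - assert (Hl : forall p, In p l -> fst p <= snd p) by (intros; apply H; simpl; auto).
    assert (Ha : fst a <= snd a) by (apply H; simpl; auto).
    pose proof (tot_nonneg l Hl).
    destruct N.
    + simpl. unfold plen. lra.
    + rewrite decomp_sum by lia. simpl pred. simpl nth.
      specialize (IH Hl N). simpl. unfold plen at 1. lra.
Qed.

Lemma GL (Lv : nat -> list (R * R)) (C : R) :
  (forall N, exists l, Lv (S N) = Lv N ++ l) ->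
  (forall N, (N < length (Lv N))%nat) ->
  (forall N p, In p (Lv N) -> fst p <= snd p) ->
  (forall N, tot (Lv N) <= C) ->
  exists fa fb : nat -> R, (forall i, fa i <= fb i) /\
    (forall N p, In p (Lv N) -> exists i, fa i = fst p /\ fb i = snd p) /\
    (forall N, sum_f_R0 (fun i => fb i - fa i) N <= C).
Proof.
  intros Hpre Hlen Hwf Htot.
  assert (Hpre2 : forall N M, (N <= M)%nat -> exists l, Lv M = Lv N ++ l).
  { intros N M HNM. induction HNM. exists []. rewrite app_nil_r; auto.
    destruct IHHNM as [l1 E1]. destruct (Hpre m) as [l2 E2]. exists (l1 ++ l2).
    rewrite E2, E1, app_assoc. auto. }
  assert (Hstab : forall k N, (k <= N)%nat -> nth k (Lv k) (0,0) = nth k (Lv N) (0,0)).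
  { intros k N HkN. destruct (Hpre2 k N HkN) as [l E]. rewrite E.
    rewrite app_nth1; auto. }
  exists (fun i => fst (nth i (Lv i) (0,0))), (fun i => snd (nth i (Lv i) (0,0))).
  split; [|split].
  - intros i. destruct (nth_in_or_default i (Lv i) (0,0)) as [Hin|Hd].
    + apply (Hwf i). auto.
    + rewrite Hd. simpl. lra.
  - intros N p Hp. destruct (In_nth _ _ (0,0) Hp) as [k [Hk Hkp]].
    exists k. enough (nth k (Lv k) (0,0) = p) by (rewrite H; auto).
    destruct (le_lt_dec k N) as [HkN|HkN].
    + rewrite (Hstab k N HkN). auto.
    + destruct (Hpre2 N k (Nat.lt_le_incl _ _ HkN)) as [l E]. rewrite E.
      rewrite app_nth1; auto.
  - intros N. apply Rle_trans with (sum_f_R0 (fun i => plen (nth i (Lv N) (0,0))) N).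
    + apply Req_le. apply sum_eq. intros i Hi. unfold plen. rewrite (Hstab i N Hi). auto.
    + apply Rle_trans with (tot (Lv N)); auto. apply sum_nth_le. apply Hwf.
Qed.

Fixpoint Lv (B N : nat) : list (R * R) :=
  match N with
  | O => (1, 1) :: (CovE B 0 0 1 ++ [(0, 0)])
  | S N' => Lv B N' ++ (CovE B (S N') 0 1 ++ [(0, 0)])
  end.

Lemma Lv_tot B N : tot (Lv B N) = sum_f_R0 (fun n => Ep n B) N.
Proof.
  assert (Tc : forall p l, tot (p :: l) = (snd p - fst p) + tot l) by reflexivity.
  assert (T0 : tot [(0,0)] = 0) by (simpl; ring).
  induction N; cbn [Lv].
  - rewrite Tc, tot_app, CovE_tot, T0.
    change (sum_f_R0 (fun n => Ep n B) 0) with (Ep 0 B). simpl fst; simpl snd. ring.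
  - rewrite !tot_app, IHN, CovE_tot, T0.
    change (sum_f_R0 (fun n => Ep n B) (S N)) with (sum_f_R0 (fun n => Ep n B) N + Ep (S N) B). ring.
Qed.

Lemma Lv_len B N : (N < length (Lv B N))%nat.
Proof.
  induction N; simpl. lia. rewrite !length_app. simpl. lia.
Qed.

Lemma Lv_wf B N p : In p (Lv B N) -> fst p <= snd p.
Proof.
  induction N; cbn [Lv]; intros H.
  - destruct H as [<-|H]; [simpl; lra|]. apply in_app_or in H. destruct H as [H|[<-|[]]].
    + eapply CovE_wf; [|exact H]. lra.
    + simpl; lra.
  - apply in_app_or in H. destruct H as [H|H]; auto. apply in_app_or in H.
    destruct H as [H|[<-|[]]].
    + eapply CovE_wf; [|exact H]. lra.
    + simpl; lra.
Qed.

Lemma Lv_mono B N M : (N <= M)%nat -> forall p, In p (Lv B N) -> In p (Lv B M).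
Proof.
  intros H. induction H; auto. intros p Hp. simpl. apply in_or_app. auto.
Qed.

Lemma CovE_in_Lv B n N p : (n <= N)%nat -> In p (CovE B n 0 1) -> In p (Lv B N).
Proof.
  intros H Hp. apply (Lv_mono B n N H). destruct n; cbn [Lv].
  - right. apply in_or_app. auto.
  - apply in_or_app. right. apply in_or_app. auto.
Qed.

Lemma fail_cover B : exists fa fb : nat -> R, (forall i, fa i <= fb i) /\
  (forall y, 0 <= y <= 1 -> (y = 1 \/ (y < 1 /\ exists N, FailN B N y)) ->
     exists i, fa i <= y <= fb i) /\
  (forall N, sum_f_R0 (fun i => fb i - fa i) N <= (9/10)^(B-4)).
Proof.
  destruct (GL (Lv B) ((9/10)^(B-4))) as [fa [fb [H1 [H2 H3]]]].
  - intros N. exists (CovE B (S N) 0 1 ++ [(0, 0)]). reflexivity.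
  - apply Lv_len.
  - apply Lv_wf.
  - intros N. rewrite Lv_tot. apply Ep_bound.
  - exists fa, fb. split; auto. split; auto.
    intros y Hy [E | [Hy1 [N HF]]].
    + destruct (H2 O (1,1)) as [i [Ea Eb]]. simpl; auto.
      exists i. rewrite Ea, Eb. simpl. lra.
    + destruct (CovE_cover N B y 0 1) as [n [Hn [p [Hp Hc]]]]; try lra; auto.
      destruct (H2 N p (CovE_in_Lv B n N p Hn Hp)) as [i [Ea Eb]].
      exists i. rewrite Ea, Eb. lra.
Qed.

Definition indI (a b y : R) : R := if Rle_dec a y then if Rle_dec y b then 1 else 0 else 0.

Lemma ind_01 a b y : 0 <= indI a b y <= 1.
Proof. unfold indI. destruct Rle_dec; [destruct Rle_dec|]; lra. Qed.

Module FinW.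
Import Coquelicot.Coquelicot.

Lemma is_RInt_const_R (c a b : R) : is_RInt (V:=R_NormedModule) (fun _ => c) a b ((b - a) * c).
Proof. exact (is_RInt_const (V:=R_NormedModule) a b c). Qed.
Lemma chas f a b c l1 l2 : is_RInt (V:=R_NormedModule) f a b l1 -> is_RInt (V:=R_NormedModule) f b c l2 -> is_RInt (V:=R_NormedModule) f a c (l1 + l2).
Proof. exact (is_RInt_Chasles f a b c l1 l2). Qed.
Lemma plusR f g a b l1 l2 : is_RInt (V:=R_NormedModule) f a b l1 -> is_RInt (V:=R_NormedModule) g a b l2 -> is_RInt (V:=R_NormedModule) (fun y => f y + g y) a b (l1 + l2).
Proof. exact (is_RInt_plus f g a b l1 l2). Qed.
Lemma scalR f a b k l : is_RInt (V:=R_NormedModule) f a b l -> is_RInt (V:=R_NormedModule) (fun y => k * f y) a b (k * l).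
Proof. exact (is_RInt_scal f a b k l). Qed.
Lemma extR f g a b l : (forall x, a < x < b -> f x = g x) -> a <= b ->
  is_RInt (V:=R_NormedModule) f a b l -> is_RInt (V:=R_NormedModule) g a b l.
Proof.
  intros H Hab. apply is_RInt_ext. intros x Hx. rewrite Rmin_left in Hx by lra.
  rewrite Rmax_right in Hx by lra. auto.
Qed.

Lemma ind_int a b u v : a <= b -> u <= v ->
  exists I, is_RInt (V:=R_NormedModule) (indI a b) u v I /\ I <= b - a.
Proof.
  intros Hab Huv.
  set (a' := Rmax u (Rmin a v)). set (b' := Rmax a' (Rmin b v)).
  assert (Ha' : u <= a' <= v) by (unfold a', Rmax, Rmin; repeat destruct Rle_dec; lra).
  assert (Hb' : a' <= b' <= v) by (unfold b', Rmax, Rmin in *; repeat destruct Rle_dec; lra).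
  exists ((a' - u) * 0 + (b' - a') * 1 + (v - b') * 0). split.
  - apply chas with b'; [apply chas with a'|].
    + apply (extR (fun _ => 0)); [|lra|apply is_RInt_const_R].
      intros x Hx. unfold indI. revert Hx. unfold b', a', Rmax, Rmin.
      repeat destruct Rle_dec; intros; lra.
    + apply (extR (fun _ => 1)); [|lra|apply is_RInt_const_R].
      intros x Hx. unfold indI. revert Hx. unfold b', a', Rmax, Rmin.
      repeat destruct Rle_dec; intros; lra.
    + apply (extR (fun _ => 0)); [|lra|apply is_RInt_const_R].
      intros x Hx. unfold indI. revert Hx. unfold b', a', Rmax, Rmin.
      repeat destruct Rle_dec; intros; lra.
  - unfold b', a', Rmax, Rmin; repeat destruct Rle_dec; lra.
Qed.

Lemma finW N (al be mu : nat -> R) u v : u <= v -> (forall k, al k <= be k) ->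
  (forall k, 0 <= mu k) ->
  (forall y, u <= y <= v -> 1 <= sum_f_R0 (fun k => mu k * indI (al k) (be k) y) N) ->
  v - u <= sum_f_R0 (fun k => mu k * (be k - al k)) N.
Proof.
  intros Huv Hab Hmu Hcov.
  assert (HI : forall k, exists I, is_RInt (V:=R_NormedModule) (indI (al k) (be k)) u v I /\ I <= be k - al k)
    by (intros k; apply ind_int; auto).
  assert (Hs : forall M, exists S, is_RInt (V:=R_NormedModule) (fun y => sum_f_R0 (fun k => mu k * indI (al k) (be k) y) M) u v S
                        /\ S <= sum_f_R0 (fun k => mu k * (be k - al k)) M).
  { induction M.
    - destruct (HI O) as [I [H1 H2]]. exists (mu O * I). split.
      + simpl. apply scalR. exact H1.
      + simpl. apply Rmult_le_compat_l; auto.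
    - destruct IHM as [Sm [H1 H2]]. destruct (HI (S M)) as [I [H3 H4]].
      exists (Sm + mu (S M) * I). split.
      + simpl. apply plusR; auto. apply scalR; auto.
      + simpl. pose proof (Rmult_le_compat_l (mu (S M)) _ _ (Hmu (S M)) H4). lra. }
  destruct (Hs N) as [S [H1 H2]].
  assert (v - u <= S).
  { replace (v - u) with ((v - u) * 1) by ring.
    apply (is_RInt_le (fun _ => 1) (fun y => sum_f_R0 (fun k => mu k * indI (al k) (be k) y) N) u v); auto. apply is_RInt_const_R.
    intros x Hx. apply Hcov. lra. }
  lra.
Qed.
End FinW.


Lemma sum_mono_N (f : nat -> R) : (forall k, 0 <= f k) ->
  forall N M, (N <= M)%nat -> sum_f_R0 f N <= sum_f_R0 f M.
Proof.
  intros Hf N M H. induction H; [lra|]. simpl. pose proof (Hf (S m)). lra.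
Qed.

Lemma sum_ge_term (f : nat -> R) : (forall k, 0 <= f k) ->
  forall N k, (k <= N)%nat -> f k <= sum_f_R0 f N.
Proof.
  intros Hf N k H. apply Rle_trans with (sum_f_R0 f k).
  - destruct k; simpl; [lra|]. pose proof (cond_pos_sum f k). 
    assert (0 <= sum_f_R0 f k).
    { clear -Hf. induction k; simpl; [apply Hf|]. pose proof (Hf (S k)); lra. }
    lra.
  - apply sum_mono_N; auto.
Qed.

Lemma sum_le_compat (f g : nat -> R) N : (forall k, (k <= N)%nat -> f k <= g k) ->
  sum_f_R0 f N <= sum_f_R0 g N.
Proof.
  induction N; intros H; simpl; [apply H; lia|].
  assert (sum_f_R0 f N <= sum_f_R0 g N) by (apply IHN; intros; apply H; lia).
  pose proof (H (S N) (Nat.le_refl _)). lra.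
Qed.

Lemma cont_ind (P : nat -> R -> Prop) u v :
  (forall N N' y, (N <= N')%nat -> P N y -> P N' y) -> u <= v ->
  (forall y, u <= y <= v -> exists N g, 0 < g /\ forall y', Rabs (y' - y) < g -> P N y') ->
  exists N, forall y, u <= y <= v -> P N y.
Proof.
  intros Hmono Huv Hloc.
  set (E := fun t => u <= t <= v /\ exists N, forall y, u <= y <= t -> P N y).
  assert (HEu : E u).
  { split; [lra|]. destruct (Hloc u) as [N [g [Hg HP]]]; [lra|].
    exists N. intros y Hy. apply HP. replace (y - u) with 0 by lra. rewrite Rabs_R0; auto. }
  assert (Hb : bound E) by (exists v; intros t [Ht _]; lra).
  destruct (completeness E Hb (ex_intro _ u HEu)) as [s [Hub Hlub]].
  assert (Hs : u <= s <= v).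
  { split. apply Hub; auto. apply Hlub. intros t [Ht _]; lra. }
  destruct (Hloc s Hs) as [Ns [g [Hg HPs]]].
  assert (Ht : exists t, E t /\ s - g < t).
  { apply NNPP. intros Hn. assert (is_upper_bound E (s - g)).
    { intros t Et. apply Rnot_lt_le. intros Hlt. apply Hn. exists t; auto. }
    apply Hlub in H. lra. }
  destruct Ht as [t [[Ht [Nt HPt]] Hst]].
  set (t2 := Rmin v (s + g/2)).
  assert (E2 : E t2).
  { split. unfold t2, Rmin; destruct Rle_dec; lra.
    exists (max Nt Ns). intros y Hy. destruct (Rle_dec y t).
    - apply Hmono with Nt; [lia|]. apply HPt; lra.
    - apply Hmono with Ns; [lia|]. apply HPs. apply Rabs_def1.
      + assert (y <= s + g/2) by (unfold t2, Rmin in Hy; destruct Rle_dec in Hy; lra). lra.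
      + lra. }
  assert (t2 <= s) by (apply Hub; auto).
  assert (t2 = v) by (unfold t2, Rmin in *; destruct Rle_dec; lra).
  destruct E2 as [_ [N HN]]. exists N. intros y Hy. apply HN. lra.
Qed.

Lemma lemW (al be mu : nat -> R) (u v C : R) : u <= v ->
  (forall k, al k <= be k) -> (forall k, 0 <= mu k) ->
  (forall y, u <= y <= v -> exists N, 1 <= sum_f_R0 (fun k => mu k * indI (al k) (be k) y) N) ->
  (forall N, sum_f_R0 (fun k => mu k * (be k - al k)) N <= C) ->
  v - u <= C.
Proof.
  intros Huv Hab Hmu Hcov HC.
  assert (Hsum2 : forall N, sum_f_R0 (fun k => (/2)^k) N <= 2).
  { intros N. rewrite tech3 by lra.
    assert (0 < (/2)^(S N)) by (apply pow_lt; lra).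
    apply (Rmult_le_reg_r (1 - /2)); [lra|].
    unfold Rdiv. rewrite Rmult_assoc, Rinv_l by lra. lra. }
  apply Rnot_lt_le. intros Hlt.
  set (eta := (v - u - C) / 8).
  assert (Heta : 0 < eta) by (unfold eta; lra).
  set (ek := fun k => eta * (/2)^k / (mu k + 1)).
  assert (Hek : forall k, 0 < ek k).
  { intros k. unfold ek. apply Rdiv_lt_0_compat; [|pose proof (Hmu k); lra].
    apply Rmult_lt_0_compat; auto. apply pow_lt; lra. }
  assert (Hmuek : forall k, mu k * ek k <= eta * (/2)^k).
  { intros k. unfold ek. pose proof (Hmu k). assert (0 < (/2)^k) by (apply pow_lt; lra).
    set (c := eta * (/2)^k). assert (0 < c) by (unfold c; nra).
    replace (mu k * (c / (mu k + 1))) with (c * (mu k / (mu k + 1))) by (field; lra).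
    assert (mu k / (mu k + 1) <= 1).
    { unfold Rdiv. apply (Rmult_le_reg_r (mu k + 1)); [lra|].
      rewrite Rmult_assoc, Rinv_l by lra. lra. }
    nra. }
  set (al' := fun k => al k - ek k). set (be' := fun k => be k + ek k).
  set (P := fun N y => 1 <= sum_f_R0 (fun k => mu k * indI (al' k) (be' k) y) N).
  destruct (cont_ind P u v) as [N HN]; auto.
  - intros N N' y HNN HP. unfold P in *. eapply Rle_trans; [exact HP|].
    apply sum_mono_N; auto. intros k. pose proof (Hmu k). pose proof (ind_01 (al' k) (be' k) y). nra.
  - intros y Hy. destruct (Hcov y Hy) as [N HN].
    set (Mt := sum_f_R0 mu N).
    assert (HMt : forall k, (k <= N)%nat -> mu k <= Mt).
    { intros k Hk. apply sum_ge_term; auto. }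
    assert (HMt0 : 0 <= Mt) by (pose proof (HMt O ltac:(lia)); pose proof (Hmu O); lra).
    exists N, (eta * (/2)^N / (Mt + 1)). split.
    + apply Rdiv_lt_0_compat; [|lra]. apply Rmult_lt_0_compat; auto. apply pow_lt; lra.
    + intros y' Hy'. unfold P. eapply Rle_trans; [exact HN|].
      apply sum_le_compat. intros k Hk. pose proof (Hmu k).
      apply Rmult_le_compat_l; auto.
      assert (Hg : eta * (/2)^N / (Mt + 1) <= ek k).
      { unfold ek. assert ((/2)^N <= (/2)^k).
        { replace N with (k + (N - k))%nat by lia. rewrite pow_add.
          assert ((/2)^(N-k) <= 1) by (apply pow_le1; lra).
          assert (0 < (/2)^k) by (apply pow_lt; lra). nra. }
        assert (0 < (/2)^N) by (apply pow_lt; lra).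
        unfold Rdiv. apply Rmult_le_compat; try (apply Rlt_le; apply Rinv_0_lt_compat; lra).
        - apply Rmult_le_pos; lra.
        - apply Rmult_le_compat_l; lra.
        - apply Rinv_le_contravar; [lra|]. pose proof (HMt k Hk). lra. }
      apply Rabs_lt_inv in Hy'.
      unfold indI, al', be'. destruct (Rle_dec (al k) y); [destruct (Rle_dec y (be k))|];
        repeat destruct Rle_dec; lra.
  - assert (Hfin := FinW.finW N al' be' mu u v Huv).
    assert (v - u <= sum_f_R0 (fun k => mu k * (be' k - al' k)) N).
    { apply Hfin; auto. intros k. unfold al', be'. pose proof (Hab k); pose proof (Hek k); lra. }
    assert (sum_f_R0 (fun k => mu k * (be' k - al' k)) N <=
            sum_f_R0 (fun k => mu k * (be k - al k)) N + sum_f_R0 (fun k => 2 * eta * (/2)^k) N).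
    { rewrite <- sum_plus. apply sum_le_compat. intros k _. unfold al', be'.
      pose proof (Hmuek k). lra. }
    assert (sum_f_R0 (fun k => 2 * eta * (/2)^k) N <= 4 * eta).
    { assert (E : forall M, sum_f_R0 (fun k => 2 * eta * (/2)^k) M = 2 * eta * sum_f_R0 (fun k => (/2)^k) M).
      { induction M; simpl; [ring|]. rewrite IHM. ring. }
      rewrite E. specialize (Hsum2 N). nra. }
    specialize (HC N). unfold eta in *. lra.
Qed.

Lemma even_2k k : Nat.even (2*k) = true /\ Nat.even (S (2*k)) = false.
Proof.
  induction k. split; reflexivity.
  replace (2 * S k)%nat with (S (S (2*k))) by lia. simpl. auto.
Qed.

Lemma div2_2k k : Nat.div2 (2*k) = k /\ Nat.div2 (S (2*k)) = k.
Proof. split; [apply Nat.div2_double|apply Nat.div2_succ_double]. Qed.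

Lemma sum_interleave (F : nat -> R) N :
  sum_f_R0 F (S (2*N)) = sum_f_R0 (fun k => F (2*k)%nat + F (S (2*k))) N.
Proof.
  induction N.
  - simpl. ring.
  - replace (S (2 * S N)) with (S (S (S (2*N)))) by lia.
    change (sum_f_R0 F (S (S (S (2*N))))) with (sum_f_R0 F (S (2*N)) + F (S (S (2*N))) + F (S (S (S (2*N))))).
    change (sum_f_R0 (fun k => F (2*k)%nat + F (S (2*k))) (S N)) with
      (sum_f_R0 (fun k => F (2*k)%nat + F (S (2*k))) N + (F (2 * S N)%nat + F (S (2 * S N)))).
    rewrite IHN. replace (2 * S N)%nat with (S (S (2*N))) by lia. ring.
Qed.

Lemma pos_meas (K : pt -> Prop) : nonempty2 K -> compact2 K -> ifs_invariant K ->
  positive_measure2 K.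
Proof.
  intros Hne HC HI Hnull.
  destruct (fail_cover 5) as [fa [fb [Hfab [Hfc Hfs]]]].
  simpl in Hfs.
  set (dl := (/2)^5).
  assert (Hdl : 0 < dl) by (unfold dl; apply pow_lt; lra).
  destruct (Hnull (dl/40)) as [a [b [c [d [Hbox [Hcov Hsum]]]]]]; [lra|].
  assert (Row : forall y, 0 <= y < 1 -> (forall N, ~ FailN 5 N y) ->
     exists N, dl/2 < sum_f_R0 (fun k => indI (c k) (d k) y * (b k - a k)) N).
  { intros y Hy Hnf. apply NNPP. intros Hn.
    assert (Hall : forall N, sum_f_R0 (fun k => indI (c k) (d k) y * (b k - a k)) N <= dl/2).
    { intros N. apply Rnot_lt_le. intros Hlt. apply Hn. exists N; auto. }
    assert (dl - 0 <= dl/2); [|lra].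
    apply (lemW a b (fun k => indI (c k) (d k) y) 0 dl (dl/2)); auto; try lra.
    - intros k. apply Hbox.
    - intros k. apply ind_01.
    - intros x Hx. assert (Kx : K (x, y)) by (apply (greedy K Hne HC HI 5 y); auto).
      destruct (Hcov _ Kx) as [i [Hi1 Hi2]]. simpl in Hi1, Hi2.
      exists i. eapply Rle_trans; [|apply sum_ge_term with (k := i); auto].
      + unfold indI. destruct (Rle_dec (c i) y); [|lra]. destruct (Rle_dec y (d i)); [|lra].
        destruct (Rle_dec (a i) x); [|lra]. destruct (Rle_dec x (b i)); lra.
      + intros k. pose proof (ind_01 (c k) (d k) y). pose proof (ind_01 (a k) (b k) x). nra. }
  set (al2 := fun i => if Nat.even i then fa (Nat.div2 i) else c (Nat.div2 i)).
  set (be2 := fun i => if Nat.even i then fb (Nat.div2 i) else d (Nat.div2 i)).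
  set (mu2 := fun i => if Nat.even i then 1 else (b (Nat.div2 i) - a (Nat.div2 i)) * (2 / dl)).
  assert (E0 : forall k, al2 (2*k)%nat = fa k /\ be2 (2*k)%nat = fb k /\ mu2 (2*k)%nat = 1).
  { intros k. unfold al2, be2, mu2. destruct (even_2k k) as [-> _]. destruct (div2_2k k) as [-> _]. auto. }
  assert (E1 : forall k, al2 (S (2*k)) = c k /\ be2 (S (2*k)) = d k /\
                         mu2 (S (2*k)) = (b k - a k) * (2 / dl)).
  { intros k. unfold al2, be2, mu2. destruct (even_2k k) as [_ ->]. destruct (div2_2k k) as [_ ->]. auto. }
  assert (Hmu2 : forall i, 0 <= mu2 i).
  { intros i. unfold mu2. destruct (Nat.even i); [lra|].
    destruct (Hbox (Nat.div2 i)). apply Rmult_le_pos; [lra|]. apply Rlt_le, Rdiv_lt_0_compat; lra. }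
  assert (Hab2 : forall i, al2 i <= be2 i).
  { intros i. unfold al2, be2. destruct (Nat.even i); [apply Hfab|apply Hbox]. }
  assert (1 - 0 <= 9/10 + 1/20); [|lra].
  apply (lemW al2 be2 mu2 0 1); auto; try lra.
  - intros y Hy.
    destruct (classic (y = 1 \/ (y < 1 /\ exists N, FailN 5 N y))) as [Hf|Hf].
    + destruct (Hfc y Hy Hf) as [i Hi]. exists (2*i)%nat.
      eapply Rle_trans; [|apply sum_ge_term with (k := (2*i)%nat); auto].
      * destruct (E0 i) as [-> [-> ->]]. unfold indI.
        destruct (Rle_dec (fa i) y); [|lra]. destruct (Rle_dec y (fb i)); lra.
      * intros k. pose proof (Hmu2 k). pose proof (ind_01 (al2 k) (be2 k) y). nra.
    + assert (Hy1 : y < 1) by (destruct (Req_dec y 1); [exfalso; apply Hf; auto|lra]).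
      assert (Hnf : forall N, ~ FailN 5 N y) by (intros N HN; apply Hf; right; eauto).
      destruct (Row y (conj (proj1 Hy) Hy1) Hnf) as [N HN].
      exists (S (2*N)). rewrite sum_interleave.
      apply Rle_trans with (sum_f_R0 (fun k => indI (c k) (d k) y * (b k - a k)) N * (2 / dl)).
      { apply (Rmult_le_reg_r (dl/2)); [lra|].
        replace (sum_f_R0 (fun k => indI (c k) (d k) y * (b k - a k)) N * (2 / dl) * (dl / 2))
          with (sum_f_R0 (fun k => indI (c k) (d k) y * (b k - a k)) N) by (field; lra). lra. }
      assert (Es : forall M, sum_f_R0 (fun k => indI (c k) (d k) y * (b k - a k)) M * (2 / dl) =
                sum_f_R0 (fun k => mu2 (S (2*k)) * indI (al2 (S (2*k))) (be2 (S (2*k))) y) M).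
      { induction M.
        - cbn [sum_f_R0]. destruct (E1 O) as [-> [-> ->]]. ring.
        - cbn [sum_f_R0]. rewrite Rmult_plus_distr_r, IHM. destruct (E1 (S M)) as [-> [-> ->]]. ring. }
      rewrite Es. apply sum_le_compat. intros k _.
      pose proof (Hmu2 (2*k)%nat). pose proof (ind_01 (al2 (2*k)%nat) (be2 (2*k)%nat) y). nra.
  - intros M. apply Rle_trans with (sum_f_R0 (fun i => mu2 i * (be2 i - al2 i)) (S (2*M))).
    { apply sum_mono_N; [|lia]. intros i. pose proof (Hmu2 i). pose proof (Hab2 i). nra. }
    rewrite sum_interleave.
    assert (Es : forall M, sum_f_R0 (fun k => mu2 (2*k)%nat * (be2 (2*k)%nat - al2 (2*k)%nat)
                                       + mu2 (S (2*k)) * (be2 (S (2*k)) - al2 (S (2*k)))) M =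
                 sum_f_R0 (fun i => fb i - fa i) M +
                 (2 / dl) * sum_f_R0 (fun i => (b i - a i) * (d i - c i)) M).
    { induction M0.
      - cbn [sum_f_R0]. destruct (E0 O) as [-> [-> ->]]. destruct (E1 O) as [-> [-> ->]]. ring.
      - cbn [sum_f_R0]. rewrite IHM0. destruct (E0 (S M0)) as [-> [-> ->]].
        destruct (E1 (S M0)) as [-> [-> ->]]. ring. }
    rewrite Es. specialize (Hfs M). specialize (Hsum M).
    assert ((2/dl) * sum_f_R0 (fun i => (b i - a i) * (d i - c i)) M <= (2/dl) * (dl/40)).
    { apply Rmult_le_compat_l; auto. apply Rlt_le, Rdiv_lt_0_compat; lra. }
    replace ((2/dl) * (dl/40)) with (1/20) in H by (field; lra). lra.
Qed.

Lemma ae_fibre (K : pt -> Prop) : nonempty2 K -> compact2 K -> ifs_invariant K ->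
  null1 (fun y => 0 <= y <= 1 /\ ~ fibre_has_interval K y).
Proof.
  intros Hne HC HI eps He.
  destruct (pow_lt_1_zero (9/10)) with (y := eps) as [n Hn]; auto.
  { rewrite Rabs_right; lra. }
  specialize (Hn n (Nat.le_refl _)). rewrite Rabs_right in Hn by (apply Rle_ge, pow_le; lra).
  destruct (fail_cover (n + 4)) as [fa [fb [Hfab [Hfc Hfs]]]].
  replace (n + 4 - 4)%nat with n in Hfs by lia.
  exists fa, fb. split; auto. split.
  - intros y [Hy Hnf]. apply Hfc; auto.
    destruct (Req_dec y 1); [left; auto|right]. split; [lra|].
    apply NNPP. intros Hno. apply Hnf. exists 0, ((/2)^(n+4)). split.
    + apply pow_lt; lra.
    + intros x Hx. apply (greedy K Hne HC HI (n+4) y); auto; try lra.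
      intros N HN. apply Hno. eauto.
  - intros N. specialize (Hfs N). lra.
Qed.

Theorem theorem1 (K : pt -> Prop) :
  nonempty2 K -> compact2 K -> ifs_invariant K ->
  positive_measure2 K /\ empty_interior2 K /\
  null1 (fun y => 0 <= y <= 1 /\ ~ fibre_has_interval K y).
Proof.
  intros Hne HC HI. split; [|split].
  - apply pos_meas; auto.
  - apply empty_int; auto.
  - apply ae_fibre; auto.
Qed.
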